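(* Let $D$ be a digraph with $n$ vertices which contains a directed cycle, let $g$ be its girth, and let $t$ be the number of induced directed cycles of $D$. If $tg\geq n$, then $$\alpha(D)\geq\frac{g-1}{g}\left(\frac{n^g}{tg}\right)^{\frac{1}{g-1}}.$$
   Context: All digraphs are finite, loopless and strict (at most one edge from $u$ to $v$ for distinct $u,v$). The girth of a digraph is the length of its shortest directed cycle. An induced directed cycle is a directed cycle $C$ such that the induced subdigraph on $V(C)$ is exactly $C$. A subset $S\subseteq V(D)$ is acyclic if $D[S]$ contains no directed cycle; $\alpha(D)$ is the maximum size of an acyclic subset of $V(D)$. *)

(* Defs.v *)
From mathcomp Require Import all_boot.
Set Implicit Arguments. Unset Strict Implicit. Unset Printing Implicit Defensive.

(* A digraph on a finite vertex type V is a relation e : rel V (e x y = edge x->y),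
   which is automatically strict; looplessness is a hypothesis of the theorem. *)

Definition dicycle_set (V : finType) (e : rel V) (T : {set V}) : bool :=
  (0 < #|T|) &&
  [exists s : (#|T|).-tuple V, [&& uniq s, T == [set x in s] & cycle e s]].

Definition induced_dicycle_set (V : finType) (e : rel V) (T : {set V}) : bool :=
  (0 < #|T|) &&
  [exists s : (#|T|).-tuple V,
     [&& uniq s, T == [set x in s], cycle e s &
         [forall x in T, forall y in T, e x y ==> (y == next s x)]]].

(* number of induced directed cycles (an induced cycle is determined by its vertex set) *)
Definition num_induced_dicycles (V : finType) (e : rel V) : nat :=
  #|[set T : {set V} | induced_dicycle_set e T]|.

Definition acyclic_set (V : finType) (e : rel V) (S : {set V}) : bool :=
  [forall T : {set V}, (T \subset S) ==> ~~ dicycle_set e T].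

Definition alpha (V : finType) (e : rel V) : nat :=
  \max_(S : {set V} | acyclic_set e S) #|S|.

Definition is_girth (V : finType) (e : rel V) (g : nat) : Prop :=
  (exists T : {set V}, dicycle_set e T /\ #|T| = g) /\
  (forall T : {set V}, dicycle_set e T -> g <= #|T|).

(* Main.v *)
Require Import Defs.
From mathcomp Require Import all_boot.
From Stdlib Require Import Reals.
From Stdlib Require Import Lra.
From mathcomp Require zify ssralg ssrnum order Rstruct lra.

Module Comb.
Import zify.
Set Implicit Arguments. Unset Strict Implicit. Unset Printing Implicit Defensive.
Section Comb.
Variables (V : finType) (e : rel V).
Hypothesis loopless : forall x : V, ~~ e x x.

Lemma shortcut (s : seq V) x y : uniq s -> cycle e s -> x \in s -> y \in s ->
  e x y -> y != next s x ->
  exists s2, [/\ uniq s2, cycle e s2, s2 != [::], size s2 < size s & {subset s2 <= s}].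
Proof.
move=> Us Cs xs ys exy Hn.
have xy : x != y by apply/eqP => E; move: exy; rewrite E (negbTE (loopless y)).
case/rot_to: ys => i r' Er.
have xr : x \in r'.
  by move: xs; rewrite -(mem_rot i) Er inE (negbTE xy).
case/splitPr: xr Er => r1 r2 Er.
have Ur : uniq (y :: r1 ++ x :: r2) by rewrite -Er rot_uniq.
have Cr : cycle e (y :: r1 ++ x :: r2) by rewrite -Er rot_cycle.
exists (y :: rcons r1 x); split.
- by move: Ur; rewrite -cat_rcons -cat_cons cat_uniq => /andP[].
- rewrite /= rcons_path last_rcons exy andbT.
  by move: Cr; rewrite /= -cat_rcons rcons_cat cat_path => /andP[].
- by [].
- case: r2 Er Ur Cr => [|z r2] Er Ur Cr.
  + exfalso; move/negP: Hn; apply; rewrite -(next_rot i Us) Er.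
    rewrite next_nth.
    have -> : x \in y :: r1 ++ [:: x] by rewrite inE mem_cat inE eqxx !orbT.
    have xr1 : x \notin r1 by move: Ur; rewrite /= cats1 rcons_uniq => /andP[_ /andP[]].
    rewrite /= [y == x]eq_sym (negbTE xy) index_cat (negbTE xr1) /= eqxx addn0.
    by rewrite nth_default // size_cat /= addn1.
  + by rewrite -(size_rot i s) Er /= size_rcons size_cat /= addnS; lia.
- move=> z; rewrite inE mem_rcons inE => Hz; rewrite -(mem_rot i) Er inE mem_cat inE.
  by case/orP: Hz => [->|/orP[->|->]] //; rewrite ?orbT.
Qed.

Lemma induced_sub n (s : seq V) : size s <= n -> uniq s -> cycle e s -> s != [::] ->
  exists2 C, induced_dicycle_set e C & C \subset [set x in s].
Proof.
elim: n s => [|n IH] s.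
  by rewrite leqn0 size_eq0 => ->.
move=> Hsz Us Cs Hne.
have cs : #|[set z in s]| = size s by rewrite cardsE; apply/card_uniqP.
case: (boolP [forall x in [set z in s], forall y in [set z in s], e x y ==> (y == next s x)]) => Hb.
  exists [set z in s]; last by [].
  have sz : size s == #|[set z in s]| by rewrite cs.
  apply/andP; split; first by rewrite cs lt0n size_eq0.
  apply/existsP; exists (Tuple sz); rewrite /= Us eqxx Cs /=.
  exact: Hb.
move: Hb; rewrite negb_forall_in => /exists_inP [x xs].
rewrite negb_forall_in => /exists_inP [y ys]; rewrite negb_imply => /andP[exy hne].
rewrite inE in xs; rewrite inE in ys.
have [s2 [U2 C2 N2 S2 Sub2]] := shortcut Us Cs xs ys exy hne.
have [C HC CS] := IH s2 (leq_trans S2 Hsz) U2 C2 N2.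
exists C => //; apply: (subset_trans CS); apply/subsetP => z; rewrite !inE; exact: Sub2.
Qed.

Lemma dicycle_has_induced (T : {set V}) : dicycle_set e T ->
  exists2 C, induced_dicycle_set e C & C \subset T.
Proof.
case/andP=> T0 /existsP [s /and3P [Us /eqP ET Cs]].
have Hne : tval s != [::] by rewrite -size_eq0 size_tuple -lt0n.
have [C HC CS] := induced_sub (leqnn _) Us Cs Hne.
by exists C; rewrite // ET.
Qed.

Lemma dicycle_size2 (T : {set V}) : dicycle_set e T -> 2 <= #|T|.
Proof.
case/andP=> T0 /existsP [s /and3P [Us /eqP ET Cs]].
rewrite ltn_neqAle T0 andbT; apply/negP => /eqP E1.
have Hs : size (tval s) = 1 by rewrite size_tuple -E1.
move: Hs Cs; case: (tval s) => [|a [|b r]] //= _.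
by rewrite andbT (negbTE (loopless a)).
Qed.

Lemma induced_is_dicycle (T : {set V}) : induced_dicycle_set e T -> dicycle_set e T.
Proof.
case/andP=> T0 /existsP [s /and4P [Us ET Cs _]].
by rewrite /dicycle_set T0; apply/existsP; exists s; rewrite Us ET Cs.
Qed.

Definition cnt (S : {set V}) := #|[set C : {set V} | induced_dicycle_set e C && (C \subset S)]|.

Lemma acyclic_of_cnt0 (S : {set V}) : cnt S = 0 -> acyclic_set e S.
Proof.
move=> H0; apply/forallP => T; apply/implyP => TS; apply/negP => DT.
have [C HC CS] := dicycle_has_induced DT.
move/eqP: H0; rewrite cards_eq0 => /eqP H0.
have : C \in [set C : {set V} | induced_dicycle_set e C && (C \subset S)].
  by rewrite inE HC (subset_trans CS TS).
by rewrite H0 inE.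
Qed.

Lemma cnt_bound n (S : {set V}) : #|S| <= n -> exists2 S', acyclic_set e S' & #|S| <= #|S'| + cnt S.
Proof.
elim: n S => [|n IH] S HS.
  exists S; last exact: leq_addr.
  apply: acyclic_of_cnt0; apply/eqP; rewrite cards_eq0; apply/eqP/setP => C.
  rewrite !inE; apply/negP => /andP [HC CS].
  move: HS; rewrite leqn0 cards_eq0 => /eqP S0.
  have := dicycle_size2 (induced_is_dicycle HC).
  by move: CS; rewrite S0 subset0 => /eqP ->; rewrite cards0.
case: (posnP (cnt S)) => Hc.
  by exists S; [exact: acyclic_of_cnt0 | exact: leq_addr].
move: Hc; rewrite card_gt0 => /set0Pn [C]; rewrite inE => /andP [HC CS].
have : 0 < #|C| by case/andP: HC.
rewrite card_gt0 => /set0Pn [x xC].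
have xS : x \in S by apply: (subsetP CS).
have HS1 : #|S :\ x| <= n by move: HS; rewrite (cardsD1 x S) xS.
have [S' A' H'] := IH _ HS1.
exists S' => //.
have Hlt : cnt (S :\ x) < cnt S.
  apply: proper_card; apply/properP; split.
    apply/subsetP => D; rewrite !inE => /andP [-> DS] /=.
    by apply: (subset_trans DS); exact: subsetDl.
  exists C; first by rewrite inE HC CS.
  rewrite inE HC /=; apply/negP => /subsetP /(_ x xC); by rewrite !inE eqxx.
move: H'; rewrite (cardsD1 x S) xS; lia.
Qed.

Lemma alpha_bound (S : {set V}) : #|S| - cnt S <= alpha e.
Proof.
have [S' A' H'] := cnt_bound (leqnn #|S|).
rewrite leq_subLR; apply: (leq_trans H'); rewrite addnC leq_add2l.
rewrite /alpha; apply: (@leq_bigmax_cond _ (fun S0 : {set V} => acyclic_set e S0) (fun S0 : {set V} => #|S0|)); exact: A'.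
Qed.
End Comb.

End Comb.
Import Comb.

Module M.
Import lra order Order.TTheory ssralg GRing.Theory ssrnum Num.Theory Rstruct.
Set Implicit Arguments. Unset Strict Implicit. Unset Printing Implicit Defensive.
Local Open Scope ring_scope.

Section Prob.
Variables (V : finType) (e : rel V).

Definition w (p : R) (f : {ffun V -> bool}) : R := \prod_(x : V) (if f x then p else 1 - p).
Definition Sf (f : {ffun V -> bool}) : {set V} := [set x | f x].

Lemma key (p : R) (A : {set V}) :
  \sum_(f : {ffun V -> bool}) w p f * (A \subset Sf f)%:R = p ^+ #|A|.
Proof.
pose F := (fun (i : V) (j : bool) => if j then p else if i \in A then 0 else 1 - p).
transitivity (\sum_(f : {ffun V -> bool}) \prod_(i : V) F i (f i)).
  apply: eq_bigr => f _.
  case: (boolP (A \subset Sf f)) => HA.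
    rewrite mulr1; apply: eq_bigr => i _.
    rewrite /F; case Hf: (f i) => //; case Hi: (i \in A) => //.
    by move/subsetP: HA => /(_ i Hi); rewrite inE Hf.
  rewrite mulr0.
  have [i Hi Hf] : exists2 i, i \in A & ~~ f i.
    move/subsetPn: HA => [i Hi]; rewrite inE => Hf; by exists i.
  by rewrite (bigD1 i) //= /F (negbTE Hf) Hi mul0r.
rewrite -bigA_distr_bigA -prodr_const (big_mkcond (fun i => i \in A)) /=.
apply: eq_bigr => i _; rewrite big_bool /F /=.
by case: (i \in A); rewrite ?addr0 // addrC subrK.
Qed.


Lemma card_sumR (S : {set V}) : (#|S|%:R : R) = \sum_(x : V) (([set x] \subset S) : nat)%:R.
Proof.
rewrite -sum1_card natr_sum (big_mkcond (fun x => x \in S)) /=.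
by apply: eq_bigr => x _; rewrite sub1set; case: (x \in S).
Qed.

Lemma cnt_sumR (S : {set V}) : ((cnt e S)%:R : R) =
  \sum_(C : {set V} | induced_dicycle_set e C) ((C \subset S) : nat)%:R.
Proof.
rewrite /cnt -sum1_card natr_sum (big_mkcond (fun C => C \in _)) /=.
rewrite [RHS](big_mkcond (fun C => induced_dicycle_set e C)) /=.
by apply: eq_bigr => C _; rewrite inE; case: (induced_dicycle_set e C); case: (C \subset S).
Qed.

Lemma expect (p : R) :
  \sum_(f : {ffun V -> bool}) w p f * ((#|Sf f|)%:R - (cnt e (Sf f))%:R) =
  #|V|%:R * p - \sum_(C : {set V} | induced_dicycle_set e C) p ^+ #|C|.
Proof.
under eq_bigr do rewrite card_sumR cnt_sumR mulrBr !mulr_sumr.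
rewrite sumrB; congr (_ - _); rewrite exchange_big /=.
  under eq_bigr do rewrite key cards1 expr1.
  by rewrite sumr_const mulr_natl; congr (_ *+ _); apply: eq_card.
by apply: eq_bigr => C _; rewrite key.
Qed.

Lemma sum_w (p : R) : \sum_(f : {ffun V -> bool}) w p f = 1.
Proof.
rewrite -(expr0 p) -(cards0 V) -(key p set0).
by apply: eq_bigr => f _; rewrite sub0set mulr1.
Qed.

Lemma w_ge0 (p : R) f : 0 <= p -> p <= 1 -> 0 <= w p f.
Proof.
move=> p0 p1; apply: prodr_ge0 => x _; case: (f x) => //; by rewrite subr_ge0.
Qed.

Lemma exists_good (p : R) : 0 <= p -> p <= 1 -> exists S : {set V},
  #|V|%:R * p - \sum_(C : {set V} | induced_dicycle_set e C) p ^+ #|C| <= #|S|%:R - (cnt e S)%:R.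
Proof.
move=> p0 p1.
pose F f := (#|Sf f|%:R - (cnt e (Sf f))%:R : R).
pose f0 := [ffun x : V => false].
case: (@arg_maxP _ _ _ f0 xpredT F erefl) => fm _ Hm.
exists (Sf fm); rewrite -expect.
apply: (@le_trans _ _ (\sum_(f : {ffun V -> bool}) w p f * F fm)).
  apply: ler_sum => f _; apply: ler_wpM2l; first exact: w_ge0.
  exact: Hm.
by rewrite -mulr_suml sum_w mul1r.
Qed.

Lemma bound_ring (loopless : forall x : V, ~~ e x x) (g : nat)
  (hg : forall C, induced_dicycle_set e C -> leq g #|C|) (p : R) :
  0 <= p -> p <= 1 ->
  #|V|%:R * p - (num_induced_dicycles e)%:R * p ^+ g <= (alpha e)%:R.
Proof.
move=> p0 p1.
have [S HS] := exists_good p0 p1.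
have H1 : \sum_(C : {set V} | induced_dicycle_set e C) p ^+ #|C| <=
          (num_induced_dicycles e)%:R * p ^+ g.
  apply: (@le_trans _ _ (\sum_(C : {set V} | induced_dicycle_set e C) p ^+ g)).
    by apply: ler_sum => C HC; apply: ler_wiXn2l => //; apply: hg.
  rewrite (eq_bigl (fun C => C \in [set C : {set V} | induced_dicycle_set e C])); last first.
    by move=> C; rewrite inE.
  by rewrite sumr_const mulr_natl.
have H2 := alpha_bound loopless S.
rewrite leq_subLR in H2.
have H3 : (#|S|%:R : R) <= (cnt e S)%:R + (alpha e)%:R by rewrite -natrD ler_nat.
lra.
Qed.
End Prob.
Local Close Scope ring_scope.
Local Open Scope R_scope.
Lemma bound_R (V : finType) (e : rel V) (loopless : forall x : V, ~~ e x x) (g : nat)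
  (hg : forall C, induced_dicycle_set e C -> leq g #|C|) (p : R) :
  0 <= p -> p <= 1 ->
  INR #|V| * p - INR (num_induced_dicycles e) * p ^ g <= INR (alpha e).
Proof.
move=> /RleP p0 /RleP p1.
rewrite RpowE !INRE; apply/RleP.
exact: bound_ring.
Qed.

End M.

Unset Implicit Arguments.

Theorem mainTheorem3 (V : finType) (e : rel V) (g : nat)
  (loopless : forall x : V, ~~ e x x)
  (hg : is_girth e g)
  (htg : #|V| <= num_induced_dicycles e * g) :
  (INR (alpha e) >=
   (INR g - 1) / INR g *
   Rpower (INR #|V| ^ g / (INR (num_induced_dicycles e) * INR g)) (1 / (INR g - 1)))%R.
Proof.
case: hg => [[T0 [DT0 ET0]] hmin].
have g2 : 2 <= g.
  rewrite -ET0; exact: (dicycle_size2 loopless DT0).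
have hgC : forall C, induced_dicycle_set e C -> g <= #|C|.
  by move=> C HC; apply: hmin; apply: induced_is_dicycle.
have n0 : 0 < #|V| by apply: (leq_trans _ (leq_trans g2 _)); last by rewrite -ET0; exact: max_card.
have t0 : 0 < num_induced_dicycles e.
  rewrite lt0n; apply/negP => /eqP E; move: htg; rewrite E mul0n leqn0 => /eqP E'.
  by rewrite E' in n0.
set t := num_induced_dicycles e in htg t0 *.
set n := #|V| in htg n0 *.
have HN : (0 < INR n)%R by apply: lt_0_INR; apply/ltP.
have HT : (0 < INR t)%R by apply: lt_0_INR; apply/ltP.
have HG : (2 <= INR g)%R by change 2%R with (INR 2); apply: le_INR; apply/leP.
have HNTG : (INR n <= INR t * INR g)%R by rewrite -mult_INR; apply: le_INR; apply/leP.
set q := (INR n / (INR t * INR g))%R.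
have q0 : (0 < q)%R by apply: Rdiv_lt_0_compat => //; nra.
have q1 : (q <= 1)%R.
  rewrite /q; apply (Rmult_le_reg_r (INR t * INR g)); first nra.
  rewrite /Rdiv Rmult_assoc Rinv_l; lra.
have Hg1 : INR (g - 1) = (INR g - 1)%R by rewrite minus_INR; [by [] | apply/leP; exact: ltnW].
set p := Rpower q (1 / (INR g - 1)).
have hp0 : (0 < p)%R by apply: exp_pos.
have hpq : (p ^ (g - 1) = q)%R.
  rewrite -Rpower_pow // /p Rpower_mult Hg1.
  replace (1 / (INR g - 1) * (INR g - 1))%R with 1%R by (field; lra).
  exact: Rpower_1.
have hp1 : (p <= 1)%R.
  apply: Rnot_lt_le => H1.
  have : (1 < p ^ (g - 1))%R by apply: Rlt_pow_R1 => //; apply/ltP; rewrite subn_gt0.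
  rewrite hpq; lra.
have HNg : (INR n ^ g / (INR t * INR g) = INR n ^ (g - 1) * q)%R.
  have -> : (INR n ^ g = INR n * INR n ^ (g - 1))%R.
    by rewrite tech_pow_Rmult subn1 prednK // (leq_trans _ g2).
  rewrite /q; field; lra.
have hR : Rpower (INR n ^ g / (INR t * INR g)) (1 / (INR g - 1)) = (INR n * p)%R.
  rewrite HNg -Rpower_mult_distr; last by [].
    congr (_ * _)%R.
    rewrite -Rpower_pow // Rpower_mult Hg1.
    replace ((INR g - 1) * (1 / (INR g - 1)))%R with 1%R by (field; lra).
    exact: Rpower_1.
  by apply: pow_lt.
rewrite hR.
have B := M.bound_R loopless hgC (Rlt_le _ _ hp0) hp1.
have hpg : (p ^ g = p * q)%R.
  by rewrite -hpq -[in LHS](subnK (ltnW g2)) pow_add /= Rmult_1_r Rmult_comm.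
rewrite hpg in B.
have E : ((INR g - 1) / INR g * (INR n * p) = INR n * p - INR t * (p * q))%R.
  rewrite /q; field; lra.
rewrite E; apply: Rle_ge; exact: B.
Qed.
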